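(* Let $q$ be a prime power, $m$ a positive integer with $\gcd(m,q)=1$, $\lambda\in\mathbb{F}_q^*$, and $R_\lambda=\mathbb{F}_q[x]/\langle x^m-\lambda\rangle$. Let $C$ and $D$ be one-generator $\lambda$-quasi-twisted codes of length $2m$ and index $2$ over $\mathbb{F}_q$, i.e. $C$ is the $R_\lambda$-submodule of $R_\lambda^2$ generated by $(g_{11}(x),g_{12}(x))$ and $D$ is the $R_\lambda$-submodule generated by $(f_{11}(x),f_{12}(x))$, where $g_{11}(x)\mid x^m-\lambda$ and $f_{11}(x)\mid x^m-\lambda$. Then $(C,D)$ is a linear complementary pair of codes if and only if: (A) $\gcd(g_{11}(x),g_{12}(x))=1$; (B) $\gcd(f_{11}(x),f_{12}(x))=1$; (C) $\gcd\big(x^m-\lambda,\,g_{11}(x)f_{12}(x)-g_{12}(x)f_{11}(x)\big)=1$.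
   Context: A pair $(C,D)$ of $\mathbb{F}_q$-linear codes of the same length $n$ is a linear complementary pair (LCP) of codes if $C\cap D=\{0\}$ and $C+D=\mathbb{F}_q^n$. For $\lambda\in\mathbb{F}_q^*$, $T_\lambda(x_0,\dots,x_{n-1})=(\lambda x_{n-1},x_0,\dots,x_{n-2})$; a linear code $C\subseteq\mathbb{F}_q^{2m}$ is $\lambda$-quasi-twisted of index $2$ if $T_\lambda^2(C)\subseteq C$, and it is identified with an $R_\lambda$-submodule of $R_\lambda^2$ via $(c_{0,0},c_{0,1},\dots,c_{m-1,0},c_{m-1,1})\mapsto(c_0(x),c_1(x))$, $c_j(x)=\sum_i c_{i,j}x^i$; elements of $R_\lambda$ are represented by polynomials in $\mathbb{F}_q[x]$. *)

(* Defs.v *)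
From HB Require Import structures.
From mathcomp Require Import all_boot all_order all_algebra all_field.
Set Implicit Arguments. Unset Strict Implicit. Unset Printing Implicit Defensive.
Import GRing.Theory.
Local Open Scope ring_scope.

Section QT.
Variable F : finFieldType.

Definition qt_mod (m : nat) (lam : F) : {poly F} := 'X^m - lam%:P.

Definition vcoord (n : nat) (v : 'rV[F]_n) (k : nat) : F :=
  if insub k is Some i then v ord0 i else 0.

(* The identification F^(2m) -> R_lambda^2:
   (c_{0,0},c_{0,1},...,c_{m-1,0},c_{m-1,1}) |-> (c_0(x), c_1(x)),
   c_j(x) = sum_i c_{i,j} x^i, with c_{i,j} the coordinate of index 2i+j. *)
Definition qt_comp (m : nat) (v : 'rV[F]_(2 * m)) (j : nat) : {poly F} :=
  \poly_(i < m) vcoord v (2 * i + j).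

(* The one-generator lambda-QT code of index 2 generated by (g1, g2):
   the R_lambda-submodule { a (g1, g2) : a in R_lambda } of R_lambda^2,
   seen as a subset of F^(2m). Elements of R_lambda are represented by
   polynomials of degree < m (reduction modulo x^m - lambda). *)
Definition qt_code1 (m : nat) (lam : F) (g1 g2 : {poly F}) : 'rV[F]_(2 * m) -> Prop :=
  fun v => exists a : {poly F},
    qt_comp v 0 = (a * g1) %% qt_mod m lam /\ qt_comp v 1 = (a * g2) %% qt_mod m lam.

Definition is_LCP (n : nat) (C D : 'rV[F]_n -> Prop) : Prop :=
  (forall v, C v -> D v -> v = 0) /\
  (forall v, exists c d, C c /\ D d /\ v = c + d).

End QT.

Arguments qt_code1 {F} m lam g1 g2 _.
Arguments is_LCP {F n} C D.

(* Main.v *)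
Require Import Defs.
From mathcomp Require Import all_boot all_order all_algebra all_field.
From mathcomp Require Import zify ring.
Set Implicit Arguments. Unset Strict Implicit. Unset Printing Implicit Defensive.
Import GRing.Theory.
Local Open Scope ring_scope.

Section Aux.
Variable F : finFieldType.

Lemma modp_eqE (d p q : {poly F}) : (p %% d = q %% d) <-> (d %| p - q).
Proof.
rewrite /dvdp modpD modpN subr_eq0; split; first by move=> ->.
by move/eqP.
Qed.

Lemma vcoord_lt n (v : 'rV[F]_n) k (h : (k < n)%N) : vcoord v k = v ord0 (Ordinal h).
Proof.
rewrite /vcoord; case: insubP => [i _ ei|]; last by rewrite h.
by congr (v ord0 _); apply: val_inj.
Qed.

Lemma coef_qt_comp m (v : 'rV[F]_(2 * m)) j i : (i < m)%N ->
  (qt_comp v j)`_i = vcoord v (2 * i + j).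
Proof. by move=> him; rewrite /qt_comp coef_poly him. Qed.

Lemma qt_compD m (v w : 'rV[F]_(2 * m)) j : qt_comp (v + w) j = qt_comp v j + qt_comp w j.
Proof.
apply/polyP => i; rewrite coefD !coef_poly; case: ifP => _; last by rewrite addr0.
by rewrite /vcoord; case: insub => [x|]; rewrite ?mxE ?addr0.
Qed.

Lemma qt_comp0 m j : qt_comp (0 : 'rV[F]_(2 * m)) j = 0.
Proof.
apply/polyP => i; rewrite coef0 coef_poly; case: ifP => _ //.
by rewrite /vcoord; case: insub => [x|]; rewrite ?mxE.
Qed.

Lemma qt_comp_inj m (v w : 'rV[F]_(2 * m)) :
  qt_comp v 0 = qt_comp w 0 -> qt_comp v 1 = qt_comp w 1 -> v = w.
Proof.
move=> h0 h1; apply/rowP => k.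
have hk : (k %/ 2 < m)%N by have := ltn_ord k; lia.
have ek : (2 * (k %/ 2) + k %% 2)%N = k by lia.
have := coef_qt_comp v (k %% 2) hk; have := coef_qt_comp w (k %% 2) hk.
rewrite ek !(vcoord_lt _ (ltn_ord k)).
have -> : Ordinal (ltn_ord k) = k by apply: val_inj.
have : (k %% 2 = 0 \/ k %% 2 = 1)%N by lia.
by case=> ->; [rewrite h0 | rewrite h1] => <- <-.
Qed.

Definition enc m (p0 p1 : {poly F}) : 'rV[F]_(2 * m) :=
  \row_(k < 2 * m) (if (k %% 2 == 0)%N then p0`_(k %/ 2) else p1`_(k %/ 2)).

Lemma qt_comp_enc m (p0 p1 : {poly F}) (j : nat) : (j < 2)%N ->
  (size p0 <= m)%N -> (size p1 <= m)%N ->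
  qt_comp (enc m p0 p1) j = if j == 0%N then p0 else p1.
Proof.
move=> hj s0 s1; apply/polyP => i; rewrite coef_poly.
case: ifP => him.
  have h : (2 * i + j < 2 * m)%N by lia.
  rewrite (vcoord_lt _ h) mxE /=.
  have -> : ((2 * i + j) %/ 2 = i)%N by lia.
  have -> : ((2 * i + j) %% 2 = j)%N by lia.
  by case: (j == 0%N).
have hi : (m <= i)%N by rewrite leqNgt him.
by case: (j == 0%N); rewrite nth_default //; apply: leq_trans hi.
Qed.

End Aux.

Theorem theorem5p4 (F : finFieldType) (m : nat) (lam : F)
  (g11 g12 f11 f12 : {poly F}) :
  (0 < m)%N -> coprime m #|F| -> lam != 0 ->
  g11 %| qt_mod m lam -> f11 %| qt_mod m lam ->
  is_LCP (qt_code1 m lam g11 g12) (qt_code1 m lam f11 f12) <->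
  [/\ coprimep g11 g12, coprimep f11 f12 &
      coprimep (qt_mod m lam) (g11 * f12 - g12 * f11)].
Proof.
move=> m0 _ _ gM fM.
set M := qt_mod m lam.
set d := g11 * f12 - g12 * f11.
have sM : size M = m.+1 by rewrite /M /qt_mod size_XnsubC.
have M0 : M != 0 by rewrite -size_poly_eq0 sM.
have smod (p : {poly F}) : (size (p %% M)%R <= m)%N by rewrite -ltnS -sM ltn_modpN0.
have small (p : {poly F}) : (size p <= m)%N -> p %% M = p by move=> h; rewrite modp_small // sM ltnS.
have encC a (g1 g2 : {poly F}) :
    qt_code1 m lam g1 g2 (enc m ((a * g1) %% M) ((a * g2) %% M)).
  by exists a; rewrite !qt_comp_enc ?smod.
have sqt (v : 'rV[F]_(2 * m)) j : (size (qt_comp v j) <= m)%N by apply: size_poly.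
have fromC : coprimep M d -> coprimep g11 g12 /\ coprimep f11 f12.
  move/Bezout_eq1_coprimepP => [[u v] /= e].
  have [k Ek] := dvdpP _ _ gM; have [k' Ek'] := dvdpP _ _ fM.
  split; apply/Bezout_eq1_coprimepP.
    exists (u * k + v * f12, - (v * f11)); rewrite /= -e /M Ek /d; ring.
  exists (u * k' - v * g12, v * g11); rewrite /= -e /M Ek' /d; ring.
split.
  move=> [inter surj].
  suff cop : coprimep M d by have [] := fromC cop.
  have [c1 [d1 [[a1 [ca0 ca1]] [[b1 [db0 db1]] e1]]]] := surj (enc m 1 0).
  have [c2 [d2 [[a2 [cb0 cb1]] [[b2 [dc0 dc1]] e2]]]] := surj (enc m 0 1).
  have s1 : (size (1 : {poly F})%R <= m)%N by rewrite size_poly1.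
  have s0 : (size (0 : {poly F})%R <= m)%N by rewrite size_poly0.
  have h10 := congr1 (fun w => qt_comp w 0%N) e1.
  have h11 := congr1 (fun w => qt_comp w 1%N) e1.
  have h20 := congr1 (fun w => qt_comp w 0%N) e2.
  have h21 := congr1 (fun w => qt_comp w 1%N) e2.
  move: h10 h11 h20 h21 => /=.
  rewrite !qt_compD !qt_comp_enc // ca0 ca1 db0 db1 cb0 cb1 dc0 dc1 -!modpD /=.
  move=> h10 h11 h20 h21.
  have D1 : M %| a1 * g11 + b1 * f11 - 1.
    by apply/modp_eqE; rewrite -h10 small.
  have D4 : M %| a2 * g12 + b2 * f12 - 1.
    by apply/modp_eqE; rewrite -h21 small.
  have D2 : M %| a1 * g12 + b1 * f12 by rewrite /dvdp -h11.
  have D3 : M %| a2 * g11 + b2 * f11 by rewrite /dvdp -h20.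
  have [k1 E1] := dvdpP _ _ D1; have [k2 E2] := dvdpP _ _ D2.
  have [k3 E3] := dvdpP _ _ D3; have [k4 E4] := dvdpP _ _ D4.
  apply/Bezout_eq1_coprimepP.
  exists (- (k1 * (a2 * g12 + b2 * f12) + k4 - k2 * (a2 * g11 + b2 * f11)),
          a1 * b2 - a2 * b1) => /=.
  have -> : - (k1 * (a2 * g12 + b2 * f12) + k4 - k2 * (a2 * g11 + b2 * f11)) * M
     + (a1 * b2 - a2 * b1) * d =
     (a1 * b2 - a2 * b1) * d - ((k1 * M) * (a2 * g12 + b2 * f12) + k4 * M
        - (k2 * M) * (a2 * g11 + b2 * f11)) by ring.
  rewrite -E1 -E2 -E4 /d; ring.
move=> [_ _ cop].
have [[u0 v0] /= e] := Bezout_eq1_coprimepP _ _ cop.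
split.
  move=> v [a [ca0 ca1]] [b [cb0 cb1]].
  have D0 : M %| a * g11 - b * f11 by apply/modp_eqE; rewrite -ca0 -cb0.
  have D1 : M %| a * g12 - b * f12 by apply/modp_eqE; rewrite -ca1 -cb1.
  have [k0 E0] := dvdpP _ _ D0; have [k1 E1] := dvdpP _ _ D1.
  have Ma : M %| a.
    apply/dvdpP; exists (a * u0 + v0 * (f12 * k0 - f11 * k1)).
    have -> : (a * u0 + v0 * (f12 * k0 - f11 * k1)) * M =
       a * u0 * M + v0 * (f12 * (k0 * M) - f11 * (k1 * M)) by ring.
    rewrite -E0 -E1 -[a in LHS]mulr1 -e /d; ring.
  apply: qt_comp_inj; rewrite qt_comp0 ?ca0 ?ca1; apply/eqP.
    by have := dvdp_mulr g11 Ma.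
  by have := dvdp_mulr g12 Ma.
move=> v.
pose p0 := qt_comp v 0; pose p1 := qt_comp v 1.
pose a := v0 * (p0 * f12 - p1 * f11); pose b := v0 * (p1 * g11 - p0 * g12).
exists (enc m ((a * g11) %% M) ((a * g12) %% M)),
       (enc m ((b * f11) %% M) ((b * f12) %% M)).
split; first exact: encC.
split; first exact: encC.
apply: qt_comp_inj; rewrite qt_compD !qt_comp_enc ?smod //= -modpD.
  rewrite -[LHS](small _ (sqt v 0%N)); apply/modp_eqE; apply/dvdpP.
  exists (p0 * u0).
  have -> : qt_comp v 0 - (a * g11 + b * f11) = p0 * (1 - v0 * d) by rewrite /a /b /d /p0 /p1; ring.
  by rewrite -e; ring.
rewrite -[LHS](small _ (sqt v 1%N)); apply/modp_eqE; apply/dvdpP.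
exists (p1 * u0).
have -> : qt_comp v 1 - (a * g12 + b * f12) = p1 * (1 - v0 * d) by rewrite /a /b /d /p0 /p1; ring.
by rewrite -e; ring.
Qed.
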